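(* Let $x_1,\dots,x_n\in\mathbb{R}^p$, let $T\subset\{1,\dots,p\}$ with $|T|=s\geqslant1$, fix $c>1$ and let $\bar c=(c+1)/(c-1)$. Then for any integer $m>0$, $$\kappa_{\bar c}\geqslant\kappa(m)\Big(1-\mu(m)\,\bar c\sqrt{\frac sm}\Big).$$
   Context: $\|\delta\|_{2,n}=\sqrt{n^{-1}\sum_{i=1}^n(x_i'\delta)^2}$; for $A\subset\{1,\dots,p\}$, $\delta_A$ is $\delta$ with entries outside $A$ set to zero, and $T^c$ is the complement of $T$. Restricted eigenvalue: $\kappa_{\bar c}=\min\{\sqrt s\|\delta\|_{2,n}/\|\delta_T\|_1:\ \|\delta_{T^c}\|_1\leqslant\bar c\|\delta_T\|_1,\ \delta_T\neq0\}$. Sparse eigenvalues: $\kappa(m)^2=\min$ and $\phi(m)=\max$ of $\|\delta\|_{2,n}^2/\|\delta\|^2$ over $\delta\neq0$ with $\|\delta_{T^c}\|_0\leqslant m$ (number of nonzero entries outside $T$ at most $m$), and $\mu(m)=\sqrt{\phi(m)}/\kappa(m)$, so that $\kappa(m)\mu(m)=\sqrt{\phi(m)}$. *)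

(* Defs.v *)
From HB Require Import structures.
From mathcomp Require Import all_boot all_order all_algebra.
From mathcomp Require Import classical_sets reals.
Set Implicit Arguments. Unset Strict Implicit. Unset Printing Implicit Defensive.
Import Order.TTheory GRing.Theory Num.Theory.
Local Open Scope classical_set_scope.
Local Open Scope ring_scope.

Section Defs.
Variables (R : realType) (n p : nat).
(* design: X i j = j-th coordinate of x_i, i < n, j < p *)
Variable X : 'I_n -> 'I_p -> R.

Definition norm2n (d : 'I_p -> R) : R :=
  Num.sqrt (n%:R^-1 * \sum_(i < n) (\sum_(j < p) X i j * d j) ^+ 2).

Definition restr (A : {set 'I_p}) (d : 'I_p -> R) : 'I_p -> R :=
  fun j => if j \in A then d j else 0.

Definition l1 (d : 'I_p -> R) : R := \sum_(j < p) `|d j|.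
Definition l2 (d : 'I_p -> R) : R := Num.sqrt (\sum_(j < p) d j ^+ 2).
Definition l0 (d : 'I_p -> R) : nat := #|[set j | d j != 0]|.

(* restricted eigenvalue kappa_{cbar} (minimum taken as infimum) *)
Definition kappa_re (T : {set 'I_p}) (cb : R) : R :=
  inf [set r | exists d : 'I_p -> R,
        [/\ l1 (restr (~: T) d) <= cb * l1 (restr T d),
            restr T d <> (fun _ => 0) &
            r = Num.sqrt (#|T|%:R) * norm2n d / l1 (restr T d)]].

Definition kappa_sp (T : {set 'I_p}) (m : nat) : R :=
  Num.sqrt (inf [set r | exists d : 'I_p -> R,
        [/\ d <> (fun _ => 0), (l0 (restr (~: T) d) <= m)%N &
            r = norm2n d ^+ 2 / l2 d ^+ 2]]).

Definition phi_sp (T : {set 'I_p}) (m : nat) : R :=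
  sup [set r | exists d : 'I_p -> R,
        [/\ d <> (fun _ => 0), (l0 (restr (~: T) d) <= m)%N &
            r = norm2n d ^+ 2 / l2 d ^+ 2]].

Definition mu_sp (T : {set 'I_p}) (m : nat) : R :=
  Num.sqrt (phi_sp T m) / kappa_sp T m.
End Defs.

(* Main.v *)
Require Import Defs.
From HB Require Import structures.
From mathcomp Require Import all_boot all_order all_algebra.
From mathcomp Require Import classical_sets reals.
From mathcomp Require Import ring lra zify.
Import Order.TTheory GRing.Theory Num.Theory.
Local Open Scope ring_scope.

Lemma cs2 (R : realType) (I : finType) (P : pred I) (a b : I -> R) :
  (\sum_(i | P i) a i * b i) ^+ 2 <=
  (\sum_(i | P i) a i ^+ 2) * (\sum_(i | P i) b i ^+ 2).
Proof.
have H0 : 0 <= \sum_(i | P i) \sum_(j | P j) (a i * b j - a j * b i) ^+ 2.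
  by apply: sumr_ge0 => i _; apply: sumr_ge0 => j _; exact: sqr_ge0.
have E : \sum_(i | P i) \sum_(j | P j) (a i * b j - a j * b i) ^+ 2 =
   ((\sum_(i | P i) a i ^+ 2) * (\sum_(i | P i) b i ^+ 2)) *+ 2
   - (\sum_(i | P i) a i * b i) ^+ 2 *+ 2.
  have -> : \sum_(i | P i) \sum_(j | P j) (a i * b j - a j * b i) ^+ 2 =
     \sum_(i | P i) \sum_(j | P j) (a i ^+ 2 * b j ^+ 2)
   + \sum_(i | P i) \sum_(j | P j) (a j ^+ 2 * b i ^+ 2)
   - (\sum_(i | P i) \sum_(j | P j) ((a i * b i) * (a j * b j))) *+ 2.
    rewrite -!sumrMnl -!big_split -sumrB /=; apply: eq_bigr => i _.
    rewrite -!sumrMnl -!big_split -sumrB /=; apply: eq_bigr => j _.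
    ring.
  rewrite -!big_distrlr /= (exchange_big _ _ _ P P) /= -big_distrlr /= expr2.
  ring.
lra.
Qed.

Lemma cs (R : realType) (I : finType) (P : pred I) (a b : I -> R) :
  `|\sum_(i | P i) a i * b i| <=
  Num.sqrt (\sum_(i | P i) a i ^+ 2) * Num.sqrt (\sum_(i | P i) b i ^+ 2).
Proof.
rewrite -sqrtrM; last by apply: sumr_ge0 => i _; exact: sqr_ge0.
by rewrite -sqrtr_sqr ler_sqrt ?cs2 // mulr_ge0 // sumr_ge0 // => i _; exact: sqr_ge0.
Qed.

Lemma mink (R : realType) (I : finType) (k : R) (u v : I -> R) : 0 <= k ->
  Num.sqrt (k * \sum_i (u i + v i) ^+ 2) <=
  Num.sqrt (k * \sum_i u i ^+ 2) + Num.sqrt (k * \sum_i v i ^+ 2).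
Proof.
move=> k0.
have A0 : 0 <= \sum_i u i ^+ 2 by apply: sumr_ge0 => i _; exact: sqr_ge0.
have B0 : 0 <= \sum_i v i ^+ 2 by apply: sumr_ge0 => i _; exact: sqr_ge0.
set s := Num.sqrt _ + Num.sqrt _.
have s0 : 0 <= s by rewrite addr_ge0 // sqrtr_ge0.
rewrite -(ger0_norm s0) -sqrtr_sqr ler_sqrt; last exact: sqr_ge0.
rewrite /s sqrrD !sqr_sqrtr ?mulr_ge0 // !sqrtrM //.
have E : \sum_i (u i + v i) ^+ 2 = \sum_i u i ^+ 2 + \sum_i v i ^+ 2 + (\sum_i u i * v i) *+ 2.
  rewrite -sumrMnl -!big_split /=; apply: eq_bigr => i _; ring.
rewrite E.
have h := @cs _ _ predT u v.
have h2 : \sum_i u i * v i <= Num.sqrt (\sum_i u i ^+ 2) * Num.sqrt (\sum_i v i ^+ 2).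
  by apply: le_trans (ler_norm _) h.
have sk : 0 <= Num.sqrt k by exact: sqrtr_ge0.
have sk2 := sqr_sqrtr k0.
nra.
Qed.

Section S.
Variables (R : realType) (n p : nat) (X : 'I_n -> 'I_p -> R).

Lemma sumsq_ge0 (I : finType) (P : pred I) (a : I -> R) : 0 <= \sum_(i | P i) a i ^+ 2.
Proof. by apply: sumr_ge0 => i _; exact: sqr_ge0. Qed.

Lemma norm2n_ge0 d : 0 <= norm2n X d.
Proof. exact: sqrtr_ge0. Qed.

Lemma norm2n_sq d : norm2n X d ^+ 2 = n%:R^-1 * \sum_(i < n) (\sum_(j < p) X i j * d j) ^+ 2.
Proof. by rewrite sqr_sqrtr // mulr_ge0 ?invr_ge0 ?ler0n ?sumsq_ge0. Qed.

Lemma norm2n_add a b : norm2n X (fun j => a j + b j) <= norm2n X a + norm2n X b.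
Proof.
rewrite /norm2n.
have E i : \sum_(j < p) X i j * (a j + b j) =
   \sum_(j < p) X i j * a j + \sum_(j < p) X i j * b j.
  by rewrite -big_split; apply: eq_bigr => j _; rewrite mulrDr.
under eq_bigr do rewrite E.
by apply: mink; rewrite invr_ge0 ler0n.
Qed.

Lemma norm2n_opp a : norm2n X (fun j => - a j) = norm2n X a.
Proof.
rewrite /norm2n; do 2 f_equal; apply: eq_bigr => i _.
have -> : \sum_(j < p) X i j * - a j = - \sum_(j < p) X i j * a j.
  by rewrite -sumrN; apply: eq_bigr => j _; rewrite mulrN.
by rewrite sqrrN.
Qed.

Lemma l2_sq (d : 'I_p -> R) : l2 d ^+ 2 = \sum_(j < p) d j ^+ 2.
Proof. by rewrite sqr_sqrtr // sumsq_ge0. Qed.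

Lemma l2_ge0 (d : 'I_p -> R) : 0 <= l2 d.
Proof. exact: sqrtr_ge0. Qed.

Lemma l1_ge0 (d : 'I_p -> R) : 0 <= l1 d.
Proof. by apply: sumr_ge0 => j _. Qed.

Lemma restrE (A : {set 'I_p}) (d : 'I_p -> R) j : restr A d j = if j \in A then d j else 0.
Proof. by []. Qed.

Lemma l1_restr (A : {set 'I_p}) (d : 'I_p -> R) : l1 (restr A d) = \sum_(j in A) `|d j|.
Proof. by rewrite /l1 [RHS]big_mkcond; apply: eq_bigr => j _; rewrite /restr; case: ifP => // _; rewrite normr0. Qed.

Lemma l2sq_restr (A : {set 'I_p}) (d : 'I_p -> R) : l2 (restr A d) ^+ 2 = \sum_(j in A) d j ^+ 2.
Proof. by rewrite l2_sq [RHS]big_mkcond; apply: eq_bigr => j _; rewrite /restr; case: ifP => // _; rewrite expr0n. Qed.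

Lemma l0_restr (A : {set 'I_p}) (d : 'I_p -> R) : l0 (restr A d) = #|A :&: [set j | d j != 0]|.
Proof.
rewrite /l0; apply: eq_card => j; rewrite !inE /restr.
rewrite unfold_in /= boolp.asboolb; by case: (j \in A) => //=; rewrite eqxx.
Qed.

Lemma l0E (d : 'I_p -> R) : l0 d = #|[set j | d j != 0]|.
Proof. by apply: eq_card => j; rewrite unfold_in /= boolp.asboolb inE. Qed.

Lemma l2_pos (d : 'I_p -> R) : d <> (fun _ => 0) -> 0 < l2 d.
Proof.
move=> nd.
have [j dj] : exists j, d j != 0.
  case: (pickP (fun j => d j != 0)) => [j dj|H]; first by exists j.
  by exfalso; apply: nd; apply: boolp.funext => j; have /negbFE/eqP := H j.
rewrite sqrtr_gt0 (bigD1 j) //= ltr_wpDr ?sumsq_ge0 //.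
by rewrite exprn_even_gt0.
Qed.

Lemma l2_zero : l2 (fun _ : 'I_p => 0 : R) = 0.
Proof. by rewrite /l2 big1 ?sqrtr0 // => j _; rewrite expr0n. Qed.


Lemma norm2n_zero : norm2n X (fun _ => 0) = 0.
Proof.
rewrite /norm2n big1 ?mulr0 ?sqrtr0 // => i _.
by rewrite big1 ?expr0n // => j _; rewrite mulr0.
Qed.

Lemma sq_le (a b : R) : 0 <= a -> 0 <= b -> a ^+ 2 <= b ^+ 2 -> a <= b.
Proof. by move=> a0 b0; rewrite ler_sqr // nnegrE. Qed.

Lemma kappa_bound (T : {set 'I_p}) m (d : 'I_p -> R) :
  (l0 (restr (~: T) d) <= m)%N -> kappa_sp X T m * l2 d <= norm2n X d.
Proof.
move=> hd; rewrite /kappa_sp; set E := (X in inf X).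
case: (boolp.pselect (d = fun _ => 0)) => [->|nd].
  by rewrite l2_zero mulr0 norm2n_ge0.
have rE : E (norm2n X d ^+ 2 / l2 d ^+ 2) by exists d.
have lb : lbound E 0.
  by move=> r [d' [_ _ ->]]; rewrite divr_ge0 // sqr_ge0.
have hinf : inf E <= norm2n X d ^+ 2 / l2 d ^+ 2 := ge_inf (ex_intro _ 0 lb) rE.
have inf0 : 0 <= inf E := lb_le_inf (ex_intro _ _ rE) lb.
have l2p := @l2_pos _ nd.
apply: sq_le; first by rewrite mulr_ge0 ?sqrtr_ge0 ?l2_ge0.
  exact: norm2n_ge0.
rewrite exprMn sqr_sqrtr // -ler_pdivlMr ?exprn_gt0 //.
Qed.

Lemma phi_bound (T : {set 'I_p}) m (d : 'I_p -> R) :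
  (l0 (restr (~: T) d) <= m)%N -> norm2n X d <= Num.sqrt (phi_sp X T m) * l2 d.
Proof.
move=> hd; rewrite /phi_sp; set E := (X in sup X).
case: (boolp.pselect (d = fun _ => 0)) => [->|nd].
  by rewrite norm2n_zero mulr_ge0 ?sqrtr_ge0 ?l2_ge0.
have rE : E (norm2n X d ^+ 2 / l2 d ^+ 2) by exists d.
pose M := n%:R^-1 * \sum_(i < n) \sum_(j < p) X i j ^+ 2.
have ub : ubound E M.
  move=> r [d' [nd' _ ->]].
  have l2p' := @l2_pos _ nd'.
  rewrite ler_pdivrMr ?exprn_gt0 // norm2n_sq l2_sq /M -mulrA ler_wpM2l ?invr_ge0 ?ler0n //.
  rewrite mulr_suml; apply: ler_sum => i _.
  exact: (@cs2 _ _ predT).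
have hsup : norm2n X d ^+ 2 / l2 d ^+ 2 <= sup E := ub_le_sup (ex_intro _ M ub) rE.
have l2p := @l2_pos _ nd.
have sup0 : 0 <= sup E.
  by apply: le_trans hsup; rewrite divr_ge0 // sqr_ge0.
apply: sq_le; first exact: norm2n_ge0.
  by rewrite mulr_ge0 ?sqrtr_ge0 ?l2_ge0.
rewrite exprMn (sqr_sqrtr sup0) -ler_pdivrMr ?exprn_gt0 //.
Qed.


Lemma argmx (v : 'I_p -> R) (A : {set 'I_p}) j1 : j1 \in A ->
  exists2 j0, j0 \in A & forall j, j \in A -> `|v j| <= `|v j0|.
Proof.
move=> h.
case: (arg_maxP (fun j => `|v j|) h) => j0 ? H.
by exists j0.
Qed.

Lemma top_exists (v : 'I_p -> R) (S : {set 'I_p}) k : (k <= #|S|)%N ->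
  exists B : {set 'I_p}, [/\ B \subset S, #|B| = k &
    forall j j', j \in B -> j' \in S :\: B -> `|v j'| <= `|v j|].
Proof.
elim: k => [_|k IH hk].
  exists finset.set0; split; [exact: finset.sub0set | exact: cards0 | by move=> j j'; rewrite inE].
have [B [sBS cB top]] := IH (ltnW hk).
have : (0 < #|S :\: B|)%N by rewrite cardsD (finset.setIidPr sBS) cB subn_gt0.
case/card_gt0P => j1 hj1.
have [j0 hj0 mx] := @argmx v _ _ hj1.
exists (j0 |: B); split.
- by rewrite finset.subUset finset.sub1set sBS andbT; move: hj0; rewrite inE => /andP[].
- by rewrite cardsU1 cB; move: hj0; rewrite inE => /andP[->].
move=> j j'; rewrite in_setU1 => /orP[/eqP->|jB] hj'.
  by apply: mx; move: hj'; rewrite !inE negb_or => /andP[/andP[_ ->] ->].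
by apply: top => //; move: hj'; rewrite !inE negb_or => /andP[/andP[_ ->] ->].
Qed.


Lemma restr_split (A : {set 'I_p}) (w : 'I_p -> R) :
  w = (fun j => restr A w j + restr (~: A) w j).
Proof.
apply: boolp.funext => j; rewrite /restr inE.
by case: (j \in A) => /=; rewrite ?addr0 ?add0r.
Qed.

Lemma l1_split (A : {set 'I_p}) (w : 'I_p -> R) :
  l1 w = l1 (restr A w) + l1 (restr (~: A) w).
Proof.
rewrite /l1 -big_split /=; apply: eq_bigr => j _; rewrite /restr inE.
by case: (j \in A) => /=; rewrite normr0 ?addr0 ?add0r.
Qed.

Lemma l0_le_card (A : {set 'I_p}) (w : 'I_p -> R) : (l0 (restr A w) <= #|A|)%N.
Proof. by rewrite l0_restr subset_leq_card // finset.subsetIl. Qed.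

Lemma l0_le_l0 (A : {set 'I_p}) (w : 'I_p -> R) : (l0 (restr A w) <= l0 w)%N.
Proof. by rewrite l0_restr l0E subset_leq_card // finset.subsetIr. Qed.

Lemma l2_le (w : 'I_p -> R) a : 0 <= a -> (forall j, `|w j| <= a) ->
  l2 w <= Num.sqrt (l0 w)%:R * a.
Proof.
move=> a0 hw.
apply: sq_le; [exact: l2_ge0 | by rewrite mulr_ge0 ?sqrtr_ge0 |].
set S := [set j | w j != 0].
have -> : w = restr S w.
  apply: boolp.funext => j; rewrite /restr inE.
  by case: eqP => //= ->.
rewrite l2sq_restr exprMn sqr_sqrtr ?ler0n //.
have -> : l0 (restr S w) = #|S|.
  by rewrite l0_restr -/S finset.setIid.
apply: (@le_trans _ _ (\sum_(j in S) a ^+ 2)).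
  apply: ler_sum => j _; rewrite -real_normK ?num_real //.
  by rewrite ler_sqr ?nnegrE //.
by rewrite sumr_const mulr_natl.
Qed.


Lemma IL (sph : R) (m : nat) : (0 < m)%N -> 0 <= sph ->
  (forall u, (l0 u <= m)%N -> norm2n X u <= sph * l2 u) ->
  forall k (w : 'I_p -> R) (a : R), (l0 w <= k)%N -> 0 <= a ->
  (forall j, `|w j| <= a) ->
  norm2n X w <= sph * (Num.sqrt m%:R * a + l1 w / Num.sqrt m%:R).
Proof.
move=> m0 sph0 PB.
have q0 : 0 < Num.sqrt (m%:R : R) by rewrite sqrtr_gt0 ltr0n.
have small : forall (w : 'I_p -> R) a, (l0 w <= m)%N -> 0 <= a ->
    (forall j, `|w j| <= a) -> norm2n X w <= sph * (Num.sqrt m%:R * a).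
  move=> w a hl a0 hw; apply: le_trans (PB _ hl) _.
  rewrite ler_wpM2l //; apply: le_trans (@l2_le w a a0 hw) _.
  by rewrite ler_wpM2r // ler_sqrt ?ler0n // ler_nat.
elim=> [|k IH] w a hk a0 hw.
  apply: le_trans (small w a (leq_trans hk (leq0n _)) a0 hw) _.
  by rewrite ler_wpM2l // lerDl divr_ge0 ?l1_ge0 // ltW.
case: (leqP (l0 w) m) => hl.
  apply: le_trans (small w a hl a0 hw) _.
  by rewrite ler_wpM2l // lerDl divr_ge0 ?l1_ge0 // ltW.
set S := [set j | w j != 0].
have hS : (m <= #|S|)%N by rewrite -l0E ltnW.
have [B [sBS cB top]] := @top_exists w S m hS.
set u1 := restr B w; set u2 := restr (~: B) w.
pose b := l1 u1 / m%:R.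
have b0 : 0 <= b by rewrite divr_ge0 ?l1_ge0 ?ler0n.
have hu2 : forall j, `|u2 j| <= b.
  move=> j; rewrite /u2 /restr inE.
  case: ifP => jB /=; last by rewrite normr0.
  case: (eqVneq (w j) 0) => [->|wj]; first by rewrite normr0.
  have jS : j \in S :\: B by rewrite !inE jB wj.
  rewrite /b ler_pdivlMr ?ltr0n // /u1 l1_restr -cB -sumr_const.
  by rewrite mulr_sumr; apply: ler_sum => i iB; rewrite mulr1; apply: top.
have hl2 : (l0 u2 <= k)%N.
  have : (l0 u2 + m <= l0 w)%N.
    rewrite /u2 l0_restr l0E -/S -cB -(cardsID B S) (finset.setIidPr sBS).
    by rewrite finset.setDE finset.setIC addnC.
  by move=> h; move: hk hl m0 h; lia.
have h2 := IH u2 b hl2 b0 hu2.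
have h1 : norm2n X u1 <= sph * (Num.sqrt m%:R * a).
  apply: small => //; first by rewrite -cB l0_le_card.
  by move=> j; rewrite /u1 /restr; case: ifP => _; rewrite ?normr0.
rewrite {1}(restr_split B w) -/u1 -/u2.
apply: le_trans (norm2n_add _ _) _.
rewrite (l1_split B w) -/u1 -/u2.
have eb : Num.sqrt m%:R * b = l1 u1 / Num.sqrt m%:R.
  rewrite /b -{2}(sqr_sqrtr (ler0n _ m)) expr2; field.
  by rewrite gt_eqF.
have := h2; rewrite eb => h2'.
rewrite mulrDl !mulrDr; rewrite !mulrDr in h2'.
lra.
Qed.


Lemma l1_pos (d : 'I_p -> R) : d <> (fun _ => 0) -> 0 < l1 d.
Proof.
move=> nd.
have [j dj] : exists j, d j != 0.
  case: (pickP (fun j => d j != 0)) => [j dj|H]; first by exists j.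
  by exfalso; apply: nd; apply: boolp.funext => j; have /negbFE/eqP := H j.
rewrite /l1 (bigD1 j) //= ltr_wpDr ?normr_gt0 //.
by apply: sumr_ge0 => i _.
Qed.

Lemma l2_restr_le (A : {set 'I_p}) (d : 'I_p -> R) : l2 (restr A d) <= l2 d.
Proof.
rewrite ler_sqrt ?sumsq_ge0 //; apply: ler_sum => j _; rewrite /restr.
by case: ifP => _ //; rewrite expr0n sqr_ge0.
Qed.

Lemma l1_cs (A : {set 'I_p}) (d : 'I_p -> R) :
  l1 (restr A d) <= Num.sqrt (#|A|%:R) * l2 (restr A d).
Proof.
rewrite l1_restr.
have := @cs _ _ (mem A) (fun j => `|d j|) (fun _ => 1).
rewrite /=.
under eq_bigr do rewrite mulr1.
under [X in _ <= _ * Num.sqrt X]eq_bigr do rewrite expr1n.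
rewrite sumr_const ger0_norm ?sumr_ge0 // mulrC => h.
apply: le_trans h _; rewrite ler_wpM2l ?sqrtr_ge0 //.
have -> : l2 (restr A d) = Num.sqrt (l2 (restr A d) ^+ 2) by rewrite sqrtr_sqr ger0_norm ?l2_ge0.
rewrite l2sq_restr ler_sqrt ?sumsq_ge0 //.
by rewrite le_eqVlt; apply/orP; left; apply/eqP/eq_bigr => j _; rewrite real_normK ?num_real.
Qed.


Lemma main (T : {set 'I_p}) (hs : (0 < #|T|)%N) (c : R) (hc : 1 < c)
  (m : nat) (hm : (0 < m)%N) :
  let cb := (c + 1) / (c - 1) in
  kappa_sp X T m * (1 - mu_sp X T m * cb * Num.sqrt (#|T|%:R / m%:R))
    <= kappa_re X T cb.
Proof.
cbv zeta; set cb := (c + 1) / (c - 1).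
have cb0 : 0 < cb by rewrite divr_gt0 // ?subr_gt0; lra.
set kap := kappa_sp X T m.
set sph := Num.sqrt (phi_sp X T m).
have kap0 : 0 <= kap by exact: sqrtr_ge0.
have sph0 : 0 <= sph by exact: sqrtr_ge0.
have q0 : 0 < Num.sqrt (m%:R : R) by rewrite sqrtr_gt0 ltr0n.
have t0 : 0 < Num.sqrt (#|T|%:R : R) by rewrite sqrtr_gt0 ltr0n.
rewrite /kappa_re; set E := (X in inf X).
apply: lb_le_inf.
  have [j0 j0T] := card_gt0P hs.
  pose d0 := fun j : 'I_p => if j \in T then (1 : R) else 0.
  have nz : restr T d0 <> (fun _ => 0).
    move=> /(congr1 (fun f => f j0)); rewrite /restr /d0 j0T => /eqP.
    by rewrite oner_eq0.
  exists (Num.sqrt (#|T|%:R) * norm2n X d0 / l1 (restr T d0)), d0; split => //.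
  have -> : restr (~: T) d0 = (fun _ => 0).
    by apply: boolp.funext => j; rewrite /restr /d0 inE; case: (j \in T).
  rewrite /l1 big1 ?normr0 // mulr_ge0 ?l1_ge0 //; exact: ltW.
move=> r [d [hc1 hnz ->]].
set L := l1 (restr T d).
have L0 : 0 < L by exact: l1_pos.
have r0 : 0 <= Num.sqrt (#|T|%:R) * norm2n X d / L.
  by rewrite divr_ge0 ?mulr_ge0 ?sqrtr_ge0 ?norm2n_ge0 // ltW.
case: (eqVneq kap 0) => [->|kapnz]; first by rewrite mul0r.
have kapp : 0 < kap by rewrite lt_def kapnz.
have [B1 [sB1 cB1 topB]] : exists B1 : {set 'I_p}, [/\ B1 \subset ~: T, (#|B1| <= m)%N &
    forall j, j \in ~: T :\: B1 -> m%:R * `|d j| <= l1 (restr B1 d)].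
  case: (leqP m #|~: T|) => hmT.
    have [B [sB cB top]] := @top_exists d (~: T) m hmT.
    exists B; split => //; first by rewrite cB.
    move=> j jS; rewrite l1_restr -cB mulr_natl -sumr_const.
    by apply: ler_sum => i iB; apply: top.
  exists (~: T); split => //; first by rewrite ltnW.
  by move=> j; rewrite finset.setDv inE.
set T1 := T :|: B1.
set u := restr T1 d; set w := restr (~: T1) d.
have ha : kap * l2 u <= norm2n X u.
  apply: kappa_bound.
  have -> : restr (~: T) u = restr B1 d.
    apply: boolp.funext => j; rewrite /u /restr !inE.
    case jB: (j \in B1).
      by have := fintype.subsetP sB1 j jB; rewrite inE => ->; rewrite orbT.
    by case: (j \in T).
  exact: leq_trans (l0_le_card _ _) cB1.
have hb : norm2n X u <= norm2n X d + norm2n X w.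
  have -> : u = (fun j => d j + - w j).
    by apply: boolp.funext => j; rewrite /u /w /restr [j \in ~: T1]inE; case: (j \in T1) => /=; rewrite ?subr0 ?subrr.
  by apply: le_trans (norm2n_add _ _) _; rewrite norm2n_opp.
pose al := l1 (restr B1 d) / m%:R.
have al0 : 0 <= al by rewrite divr_ge0 ?l1_ge0 ?ler0n.
have hw : forall j, `|w j| <= al.
  move=> j; rewrite /w /restr inE.
  case: ifP => jT1 /=; last by rewrite normr0.
  have jS : j \in ~: T :\: B1.
    by move: jT1; rewrite /T1 !inE negb_or => /andP[-> ->].
  by rewrite /al ler_pdivlMr ?ltr0n // mulrC; apply: topB.
have PB : forall u', (l0 u' <= m)%N -> norm2n X u' <= sph * l2 u'.
  move=> u' hu'; apply: phi_bound; exact: leq_trans (l0_le_l0 _ _) hu'.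
have hc' := @IL sph m hm sph0 PB (l0 w) w al (leqnn _) al0 hw.
have esum : Num.sqrt m%:R * al + l1 w / Num.sqrt m%:R = l1 (restr (~: T) d) / Num.sqrt m%:R.
  have -> : l1 (restr (~: T) d) = l1 (restr B1 d) + l1 w.
    have e1 : restr B1 (restr (~: T) d) = restr B1 d.
      apply: boolp.funext => j; rewrite /restr !inE.
      case jB: (j \in B1) => //.
      by have := fintype.subsetP sB1 j jB; rewrite inE => ->.
    have e2 : restr (~: B1) (restr (~: T) d) = w.
      apply: boolp.funext => j; rewrite /w /restr /T1 !inE.
      by case: (j \in B1); case: (j \in T).
    by rewrite (l1_split B1 (restr (~: T) d)) e1 e2.
  rewrite /al -{2}(sqr_sqrtr (ler0n _ m)) expr2; field.
  by rewrite gt_eqF.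
rewrite esum in hc'.
have hf : L <= Num.sqrt (#|T|%:R) * l2 u.
  apply: le_trans (l1_cs _ _) _; rewrite ler_wpM2l ?sqrtr_ge0 //.
  have -> : restr T d = restr T u.
    apply: boolp.funext => j; rewrite /u /restr /T1 !inE.
    by case: (j \in T).
  exact: l2_restr_le.
set t := Num.sqrt (#|T|%:R : R).
set q := Num.sqrt (m%:R : R).
have -> : Num.sqrt (#|T|%:R / m%:R) = t / q.
  by rewrite sqrtrM ?ler0n // sqrtrV ?ler0n.
rewrite /mu_sp -/sph -/kap.
rewrite ler_pdivlMr //.
set N := norm2n X d.
set nw := norm2n X w.
set nu := norm2n X u.
set l2u := l2 u.
set l1c := l1 (restr (~: T) d).
have H1 : kap * L <= kap * (t * l2u) by rewrite ler_wpM2l.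
have H2 : t * (kap * l2u) <= t * nu by rewrite ler_wpM2l // ltW.
have H3 : t * nu <= t * N + t * nw by rewrite -mulrDr ler_wpM2l // ltW.
have H4 : t * nw <= t * (sph * (cb * L / q)).
  rewrite ler_wpM2l ?(ltW t0) //; apply: le_trans hc' _.
  by rewrite ler_wpM2l // ler_pdivrMr // (_ : Num.sqrt m%:R = q) // divfK ?gt_eqF.
have -> : kap * (1 - sph / kap * cb * (t / q)) * L = kap * L - t * (sph * (cb * L / q)).
  by field; rewrite kapnz gt_eqF.
have : t * (kap * l2u) = kap * (t * l2u) by ring.
lra.
Qed.

End S.

Theorem lemma10 (R : realType) (n p : nat) (X : 'I_n -> 'I_p -> R)
  (T : {set 'I_p}) (hs : (0 < #|T|)%N) (c : R) (hc : 1 < c)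
  (m : nat) (hm : (0 < m)%N) :
  let cb := (c + 1) / (c - 1) in
  kappa_sp X T m * (1 - mu_sp X T m * cb * Num.sqrt (#|T|%:R / m%:R))
    <= kappa_re X T cb.
Proof. exact: (@main R n p X T hs c hc m hm). Qed.
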